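(* Let $I$ be a monomial ideal of $R=K[x_1,\ldots,x_d]$ ($K$ a field) and let $r\in\mathbb{R}$, $r\ge0$. Let $\mathcal{S}(I,r)$ denote the set of lattice points in $\operatorname{hype}(I,r)$. Then (1) $\lceil r\cdot\operatorname{np}(I)\rceil:=\{(\lceil p_1\rceil,\ldots,\lceil p_d\rceil)\mid \mathbf{p}\in r\cdot\operatorname{np}(I)\}\subseteq\mathcal{S}(I,r)$; (2) $\overline{I^r}=(\{\mathbf{x}^{\mathbf{a}}\mid \mathbf{a}\in r\cdot NP(I)\cap\operatorname{hype}(I,r)\cap\mathbb{N}^d\})$.
   Context: $\mathbb{N}$ denotes the non-negative integers and $\mathbf{x}^{\mathbf{a}}=x_1^{a_1}\cdots x_d^{a_d}$. $G(I)$ is the minimal monomial generating set of $I$. $NP(I)$ is the convex hull in $\mathbb{R}^d$ of $\{\mathbf{a}\in\mathbb{N}^d\mid \mathbf{x}^{\mathbf{a}}\in I\}$ and $\operatorname{np}(I)$ is the convex hull of $\{\mathbf{a}\mid \mathbf{x}^{\mathbf{a}}\in G(I)\}$. For real $r\ge0$, $\overline{I^r}=(\{\mathbf{x}^{\mathbf{a}}\mid \mathbf{a}\in r\cdot NP(I)\cap\mathbb{N}^d\})$. Let $\mathcal{V}(I,r)=\{(\lceil ra_1\rceil,\ldots,\lceil ra_d\rceil)\mid \mathbf{x}^{\mathbf{a}}\in G(I)\}$, and for $1\le i\le d$ let $\min(\mathcal{V},i)=\min_{\alpha\in\mathcal{V}(I,r)}\alpha_i$ and $\max(\mathcal{V},i)=\max_{\alpha\in\mathcal{V}(I,r)}\alpha_i$.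 The hyperrectangle is $\operatorname{hype}(I,r)=\prod_{i=1}^d[\min(\mathcal{V},i),\max(\mathcal{V},i)]\subseteq\mathbb{R}^d$. *)

(* Defs.v *)
From mathcomp Require Import all_boot all_order all_algebra.
From mathcomp Require Import mpoly.
From mathcomp Require Import reals.
Set Implicit Arguments. Unset Strict Implicit. Unset Printing Implicit Defensive.
Import Order.TTheory GRing.Theory Num.Theory.
Local Open Scope ring_scope.

Section Defs.
Variables (K : fieldType) (d : nat) (R : realType).

Definition ideal_span (S : {mpoly K[d]} -> Prop) : {mpoly K[d]} -> Prop :=
  fun f => exists (n : nat) (c s : 'I_n -> {mpoly K[d]}),
    (forall i, S (s i)) /\ f = \sum_(i < n) c i * s i.

Definition monomial_span (A : 'X_{1..d} -> Prop) : {mpoly K[d]} -> Prop :=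
  ideal_span (fun p => exists a, A a /\ p = 'X_[a]).

Definition is_monomial_ideal (I : {mpoly K[d]} -> Prop) : Prop :=
  exists A : 'X_{1..d} -> Prop, forall f, I f <-> monomial_span A f.

Definition mingens (I : {mpoly K[d]} -> Prop) (a : 'X_{1..d}) : Prop :=
  I 'X_[a] /\
  forall b : 'X_{1..d}, I 'X_[b] -> (forall j, (b j <= a j)%N) -> b = a.

Definition pt := 'I_d -> R.

Definition embed (a : 'X_{1..d}) : pt := fun j => ((a j)%:R : R).

Definition conv (S : pt -> Prop) : pt -> Prop :=
  fun p => exists (n : nat) (l : 'I_n -> R) (v : 'I_n -> pt),
    (forall i, 0 <= l i) /\ \sum_(i < n) l i = 1 /\ (forall i, S (v i)) /\
    forall j, p j = \sum_(i < n) l i * v i j.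

Definition scale (r : R) (S : pt -> Prop) : pt -> Prop :=
  fun p => exists2 q, S q & forall j, p j = r * q j.

Definition NP (I : {mpoly K[d]} -> Prop) : pt -> Prop :=
  conv (fun p => exists a, I 'X_[a] /\ p = embed a).
Definition np (I : {mpoly K[d]} -> Prop) : pt -> Prop :=
  conv (fun p => exists a, mingens I a /\ p = embed a).

(* integral closure of I^r : generated by x^a with a in r NP(I) cap N^d *)
Definition intclos_pow (I : {mpoly K[d]} -> Prop) (r : R) : {mpoly K[d]} -> Prop :=
  monomial_span (fun a => scale r (NP I) (embed a)).

Definition Vset (I : {mpoly K[d]} -> Prop) (r : R) (alpha : 'I_d -> int) : Prop :=
  exists2 a, mingens I a & forall j, alpha j = Num.ceil (r * (a j)%:R).

(* hype(I,r) = prod_i [min(V,i), max(V,i)] : a point x lies in it iff for each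
   i, some alpha in V has alpha_i <= x_i and some beta in V has x_i <= beta_i
   (V is finite, so this is exactly min(V,i) <= x_i <= max(V,i)). *)
Definition hype (I : {mpoly K[d]} -> Prop) (r : R) (x : pt) : Prop :=
  forall i : 'I_d,
    (exists2 alpha, Vset I r alpha & (alpha i)%:~R <= x i) /\
    (exists2 beta, Vset I r beta & x i <= (beta i)%:~R).

Definition Sset (I : {mpoly K[d]} -> Prop) (r : R) (z : 'I_d -> int) : Prop :=
  hype I r (fun j => (z j)%:~R).

End Defs.

(* Main.v *)
Require Import Defs.
From mathcomp Require Import all_boot all_order all_algebra.
From mathcomp Require Import mpoly.
From mathcomp Require Import reals.
From mathcomp Require Import ring lra zify.
From Stdlib Require Import Classical ClassicalEpsilon Lia.
Import Order.TTheory GRing.Theory Num.Theory.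
Local Open Scope ring_scope.
Module M_H1.
Set Implicit Arguments. Unset Strict Implicit.

Section Cone.
Variables (d : nat) (R : realType) (S : pt d R -> Prop).

Definition PP (p : pt d R) (s : R) : Prop :=
  exists (n : nat) (l : 'I_n -> R) (v : 'I_n -> pt d R),
    (forall i, 0 <= l i) /\ \sum_(i < n) l i = s /\ (forall i, S (v i)) /\
    forall j, p j = \sum_(i < n) l i * v i j.

Lemma PP_ext p q s : PP p s -> (forall j, p j = q j) -> PP q s.
Proof.
move=> [n [l [v [H1 [H2 [H3 H4]]]]]] E; exists n, l, v; do !split => //.
by move=> j; rewrite -E.
Qed.

Lemma PP0 : PP (fun _ => 0) 0.
Proof.
exists 0%N, (fun _ => 0), (fun _ _ => 0).
split; first by case.
split; first by rewrite big_ord0.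
split; first by case.
by move=> j; rewrite big_ord0.
Qed.

Lemma PP1 v : S v -> PP v 1.
Proof.
move=> Sv; exists 1%N, (fun _ => 1), (fun _ => v).
split; first by move=> _; exact: ler01.
split; first by rewrite big_ord1.
split; first by [].
by move=> j; rewrite big_ord1 mul1r.
Qed.

Lemma PP_scale p s t : 0 <= t -> PP p s -> PP (fun j => t * p j) (t * s).
Proof.
move=> t0 [n [l [v [H1 [H2 [H3 H4]]]]]]; exists n, (fun i => t * l i), v.
split; first by move=> i; rewrite mulr_ge0.
split; first by rewrite -mulr_sumr H2.
split; first by [].
by move=> j; rewrite H4 mulr_sumr; apply: eq_bigr => i _; rewrite mulrA.
Qed.

Lemma PP_add p q s t : PP p s -> PP q t -> PP (fun j => p j + q j) (s + t).
Proof.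
move=> [n [l [v [H1 [H2 [H3 H4]]]]]] [m [l' [v' [H1' [H2' [H3' H4']]]]]].
exists (n + m)%N,
  (fun i => match split i with inl a => l a | inr b => l' b end),
  (fun i => match split i with inl a => v a | inr b => v' b end).
have El : forall a : 'I_n, split (lshift m a) = inl a by move=> a; exact: (unsplitK (inl a)).
have Er : forall b : 'I_m, split (rshift n b) = inr b by move=> b; exact: (unsplitK (inr b)).
split; first by move=> i; case: (split i).
split. rewrite big_split_ord /= -H2 -H2'; congr (_ + _); apply: eq_bigr => i _.
  by rewrite El. by rewrite Er.
split; first by move=> i; case: (split i).
move=> j; rewrite big_split_ord /= H4 H4'.
  congr (_ + _); apply: eq_bigr => i _. by rewrite El. by rewrite Er.
Qed.

Lemma PP_sum n (w : 'I_n -> pt d R) (s l : 'I_n -> R) :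
  (forall k, 0 <= l k) -> (forall k, PP (w k) (s k)) ->
  PP (fun j => \sum_(k < n) l k * w k j) (\sum_(k < n) l k * s k).
Proof.
elim: n w s l => [|n IH] w s l Hl Hw.
  rewrite big_ord0; apply: PP_ext PP0 _ => j; by rewrite big_ord0.
rewrite big_ord_recr /=.
have := PP_add (IH (fun k => w (widen_ord (leqnSn n) k)) (fun k => s (widen_ord (leqnSn n) k))
   (fun k => l (widen_ord (leqnSn n) k)) (fun k => Hl _) (fun k => Hw _))
   (PP_scale (Hl ord_max) (Hw ord_max)).
by move/PP_ext; apply => j; rewrite big_ord_recr.
Qed.

End Cone.

End M_H1.
Import M_H1.

Module M_H2.
Set Implicit Arguments. Unset Strict Implicit.

Section Geo.
Variables (K : fieldType) (d : nat) (R : realType) (I : {mpoly K[d]} -> Prop).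
Hypothesis Hup : forall e u : 'X_{1..d}, I 'X_[e] -> I 'X_[(e + u)%MM].

Let S := fun p : pt d R => exists a, I 'X_[a] /\ p = embed R a.

Lemma up_coord m : forall (g : 'X_{1..d}) (c : pt d R), I 'X_[g] -> (forall j, 0 <= c j) ->
  PP S (fun j => embed R g j + (if (j < m)%N then c j else 0)) 1.
Proof.
elim: m => [|m IH] g c Ig c0.
  apply: PP_ext (PP1 (S:=S) (ex_intro _ g (conj Ig erefl))) _ => j.
  by rewrite addr0.
case: (ltnP m d) => Hm; last first.
  apply: PP_ext (IH g c Ig c0) _ => j.
  have jd := ltn_ord j.
  by rewrite ltnS (leq_trans jd Hm) (leq_trans (ltnW jd) Hm).
pose jm := Ordinal Hm.
pose t := c jm.
pose N := (Num.truncn t).+1.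
have tN : t < N%:R by apply: truncnS_gt.
have N0 : (0 : R) < N%:R by rewrite ltr0n.
pose U := [multinom (if i == jm then N else 0%N) | i < d].
have H1 := IH g c Ig c0.
have H2 := IH (g + U)%MM c (@Hup _ U Ig) c0.
have t0 : 0 <= t by apply: c0.
have a0 : 0 <= 1 - t / N%:R by rewrite subr_ge0 ler_pdivrMr // mul1r ltW.
have b0 : 0 <= t / N%:R by rewrite divr_ge0 // ltW.
have := PP_add (PP_scale a0 H1) (PP_scale b0 H2).
rewrite !mulr1 subrK.
move=> H; apply: PP_ext H _.
  move=> j; rewrite /embed mnmDE mnmE natrD.
  have -> : (j < m.+1)%N = (j == jm) || (j < m)%N by rewrite ltnS leq_eqVlt.
  case: eqP => [->|_] /=.
    rewrite ltnn /t; field; by rewrite lt0r_neq0.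
  by rewrite addr0; ring.
Qed.

Lemma NP_up n (l : 'I_n -> R) (g : 'I_n -> 'X_{1..d}) (c : pt d R) :
  (forall k, 0 <= l k) -> \sum_(k < n) l k = 1 -> (forall k, I 'X_[g k]) ->
  (forall j, 0 <= c j) ->
  NP I (fun j => \sum_(k < n) l k * ((g k j)%:R) + c j).
Proof.
move=> l0 l1 Ig c0.
have Hk : forall k, PP S (fun j => embed R (g k) j + c j) 1.
  move=> k; apply: PP_ext (@up_coord d (g k) c (Ig k) c0) _ => j.
  by rewrite ltn_ord.
have H := PP_sum (S:=S) (w := fun k j => embed R (g k) j + c j) (s := fun _ => 1) l0 Hk.
have E : \sum_(k < n) l k * 1 = 1 by under eq_bigr do rewrite mulr1.
rewrite E in H; apply: PP_ext H _ => j.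
by rewrite /embed; under eq_bigr do rewrite mulrDr; rewrite big_split /= -mulr_suml l1 mul1r.
Qed.

End Geo.

End M_H2.
Import M_H2.

Module M_H3.
Set Implicit Arguments. Unset Strict Implicit.

Lemma fchoice (A B : Type) (P : A -> B -> Prop) :
  (forall a, exists b, P a b) -> exists f : A -> B, forall a, P a (f a).
Proof.
move=> H; exists (fun a => proj1_sig (constructive_indefinite_description _ (H a))).
by move=> a; case: (constructive_indefinite_description _ (H a)).
Qed.

Lemma conv_minmax (R : realType) n (l x : 'I_n -> R) :
  (forall k, 0 <= l k) -> \sum_(k < n) l k = 1 ->
  (exists k, x k <= \sum_(k < n) l k * x k) /\
  (exists k, \sum_(k < n) l k * x k <= x k).
Proof.
case: n l x => [|n] l x l0 l1.
  by move: l1; rewrite big_ord0 => /eqP; rewrite eq_sym oner_eq0.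
split.
  have [k _ Hk] := @arg_minP _ _ _ ord0 xpredT x isT.
  exists k; rewrite -[X in X <= _]mul1r -l1 mulr_suml.
  by apply: ler_sum => i _; apply: ler_wpM2l => //; apply: Hk.
have [k _ Hk] := @arg_maxP _ _ _ ord0 xpredT x isT.
exists k; rewrite -[X in _ <= X]mul1r -l1 mulr_suml.
by apply: ler_sum => i _; apply: ler_wpM2l => //; apply: Hk.
Qed.

Section Ideal.
Variables (K : fieldType) (d : nat).

Lemma span_mulX (A : 'X_{1..d} -> Prop) (f : {mpoly K[d]}) u :
  monomial_span A f -> monomial_span A ('X_[u] * f).
Proof.
move=> [n [c [s [Hs ->]]]]; exists n, (fun i => 'X_[u] * c i), s; split => //.
by rewrite mulr_sumr; apply: eq_bigr => i _; rewrite mulrA.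
Qed.

Lemma span_mono (A B : 'X_{1..d} -> Prop) (f : {mpoly K[d]}) :
  (forall a, A a -> B a) -> monomial_span A f -> monomial_span B f.
Proof.
move=> AB [n [c [s [Hs ->]]]]; exists n, c, s; split => // i.
by have [a [Aa ->]] := Hs i; exists a; split => //; apply: AB.
Qed.

Lemma span_refine (A B : 'X_{1..d} -> Prop) (f : {mpoly K[d]}) :
  (forall a, A a -> exists b u, B b /\ a = (b + u)%MM) ->
  monomial_span A f -> monomial_span B f.
Proof.
move=> AB [n [c [s [Hs ->]]]].
have [a Ha] := fchoice Hs.
have H2 : forall i, exists bu : 'X_{1..d} * 'X_{1..d}, B bu.1 /\ a i = (bu.1 + bu.2)%MM.
  move=> i; have [b [u [Bb E]]] := AB _ (proj1 (Ha i)); by exists (b, u).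
have [bu Hbu] := fchoice H2.
exists n, (fun i => c i * 'X_[(bu i).2]), (fun i => 'X_[(bu i).1]); split.
  by move=> i; exists (bu i).1; split => //; case: (Hbu i).
apply: eq_bigr => i _; rewrite (proj2 (Ha i)) (proj2 (Hbu i)) mpolyXD.
by rewrite -mulrA [_ * 'X_[_]]mulrC.
Qed.

Lemma sum_lt (e b : 'X_{1..d}) : (forall j, (b j <= e j)%N) -> b <> e ->
  (\sum_(j < d) b j < \sum_(j < d) e j)%N.
Proof.
move=> le ne.
have [j Hj] : exists j, b j <> e j.
  apply: NNPP => H; apply: ne; apply/mnmP => j.
  by apply: NNPP => H'; apply: H; exists j.
rewrite (bigD1 j) //= [X in (_ < X)%N](bigD1 j) //=.
rewrite -addSn; apply: leq_add; last by apply: leq_sum => i _.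
by rewrite ltn_neqAle le andbT; apply/eqP.
Qed.

Lemma mingens_exists (I : {mpoly K[d]} -> Prop) N : forall e : 'X_{1..d},
  (\sum_(j < d) e j <= N)%N -> I 'X_[e] ->
  exists g, mingens I g /\ forall j, (g j <= e j)%N.
Proof.
elim: N => [|N IH] e hN Ie.
  exists e; split => //; split => // b _ le; apply/mnmP => j.
  have := le j; move: hN; rewrite (bigD1 j) //=; lia.
case: (classic (mingens I e)) => [me|nme]; first by exists e.
have [b Hb] : exists b, ~ (I 'X_[b] -> (forall j, (b j <= e j)%N) -> b = e).
  apply: NNPP => H; apply: nme; split => // b.
  by apply: NNPP => H'; apply: H; exists b.
have [Ib [le ne]] : I 'X_[b] /\ (forall j, (b j <= e j)%N) /\ b <> e.
  by apply: NNPP => H; apply: Hb => Ib le; apply: NNPP => ne; apply: H.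
have lt := sum_lt le ne.
have [g [mg gb]] := IH b (ltac:(lia)) Ib.
by exists g; split => // j; apply: leq_trans (gb j) (le j).
Qed.

End Ideal.

End M_H3.
Import M_H3.

Module M_H4.
Set Implicit Arguments. Unset Strict Implicit.

Lemma key (K : fieldType) (d : nat) (R : realType) (I : {mpoly K[d]} -> Prop) (r : R)
  (Hup : forall e u : 'X_{1..d}, I 'X_[e] -> I 'X_[(e + u)%MM]) (r0 : 0 <= r)
  (a : 'X_{1..d}) :
  scale r (NP I) (embed R a) ->
  exists b u, (scale r (NP I) (embed R b) /\ hype I r (embed R b)) /\ a = (b + u)%MM.
Proof.
move=> [q [n [l [v [l0 [l1 [Sv Hqv]]]]]] Ha].
have [e He] := fchoice Sv.
have He' : forall k, exists g, mingens I g /\ forall j, (g j <= e k j)%N.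
  move=> k; exact: (mingens_exists (leqnn _) (proj1 (He k))).
have [g Hg] := fchoice He'.
have Ha' : forall j, (a j)%:R = r * q j by move=> j; rewrite -Ha.
have Hq : forall j, q j = \sum_(k < n) l k * (e k j)%:R.
  by move=> j; rewrite Hqv; apply: eq_bigr => k _; rewrite (proj2 (He k)).
pose qg j := \sum_(k < n) l k * (g k j)%:R.
have qgq : forall j, qg j <= q j.
  move=> j; rewrite Hq; apply: ler_sum => k _; apply: ler_wpM2l => //.
  by rewrite ler_nat; apply: (proj2 (Hg k)).
have [kmin Hkmin] := fchoice (fun j => proj1 (conv_minmax (fun k => (g k j)%:R) l0 l1)).
have [kmax Hkmax] := fchoice (fun j => proj2 (conv_minmax (fun k => (g k j)%:R) l0 l1)).
pose Mn j := `|Num.ceil (r * (g (kmax j) j)%:R)|%N.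
have HMn : forall j, ((Mn j)%:R : R) = (Num.ceil (r * (g (kmax j) j)%:R))%:~R.
  move=> j; rewrite /Mn natr_absz ger0_norm // ceil_ge0.
  by apply: (@lt_le_trans _ _ 0); [rewrite ltrN10 | rewrite mulr_ge0].
have HrM : forall j, r * (g (kmax j) j)%:R <= (Mn j)%:R by move=> j; rewrite HMn ceil_ge.
pose b := [multinom minn (a i) (Mn i) | i < d].
pose u := [multinom (a i - minn (a i) (Mn i))%N | i < d].
have low : forall j, r * qg j <= (b j)%:R.
  move=> j; rewrite mnmE; case: (leqP (a j) (Mn j)) => h.
    rewrite Ha'; exact: ler_wpM2l.
  apply: le_trans (HrM j); apply: ler_wpM2l => //.
  exact: Hkmax.
exists b, u; split; last first.
  by apply/mnmP => i; rewrite mnmDE !mnmE subnKC // geq_minl.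
split.
  case: (eqVneq r 0) => [rz|rnz].
    exists q; first by exists n, l, v.
    move=> j; rewrite rz mul0r /embed mnmE.
    have : ((a j)%:R : R) = 0 by rewrite Ha' rz mul0r.
    by move/eqP; rewrite pnatr_eq0 => /eqP ->; rewrite min0n.
  have rp : 0 < r by rewrite lt_neqAle eq_sym rnz.
  exists (fun j => qg j + ((b j)%:R / r - qg j)).
    apply: (NP_up Hup) => //.
    - by move=> k; exact: (proj1 (proj1 (Hg k))).
    - move=> j; rewrite subr_ge0 ler_pdivlMr // mulrC; exact: low.
  by move=> j; rewrite /embed addrC subrK; field; rewrite lt0r_neq0.
move=> i; split.
  exists (fun j => Num.ceil (r * (g (kmin i) j)%:R)).
    by exists (g (kmin i)); [exact: (proj1 (Hg _)) | ].
  rewrite /embed -[X in _ <= X]/((Posz (b i))%:~R) ler_int ceil_le_int.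
  have H1 : r * (g (kmin i) i)%:R <= r * qg i by apply: ler_wpM2l => //; exact: Hkmin.
  apply: le_trans H1 _; exact: low.
exists (fun j => Num.ceil (r * (g (kmax i) j)%:R)).
  by exists (g (kmax i)); [exact: (proj1 (Hg _)) | ].
rewrite /embed -HMn ler_nat mnmE; exact: geq_minr.
Qed.

End M_H4.
Import M_H4.

Theorem lemma4p4 (K : fieldType) (d : nat) (R : realType)
  (I : {mpoly K[d]} -> Prop) (r : R) :
  is_monomial_ideal I -> 0 <= r ->
  (forall p : pt d R, scale r (np I) p ->
     Sset I r (fun j => Num.ceil (p j))) /\
  (forall f : {mpoly K[d]},
     intclos_pow I r f <->
     monomial_span (fun a => scale r (NP I) (embed R a) /\ hype I r (embed R a)) f).
Proof.
move=> [A HA] r0.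
have Hup : forall e u : 'X_{1..d}, I 'X_[e] -> I 'X_[(e + u)%MM].
  move=> e u /HA Ie; apply/HA; rewrite mpolyXD mulrC; exact: span_mulX.
split.
  move=> p [q [n [l [v [l0 [l1 [Sv Hqv]]]]]] Hp].
  have [g Hg] := fchoice Sv.
  have Hq : forall j, q j = \sum_(k < n) l k * (g k j)%:R.
    by move=> j; rewrite Hqv; apply: eq_bigr => k _; rewrite (proj2 (Hg k)).
  move=> i; split.
    have [k Hk] := proj1 (conv_minmax (fun k => (g k i)%:R) l0 l1).
    exists (fun j => Num.ceil (r * (g k j)%:R)).
      by exists (g k); [exact: (proj1 (Hg k)) |].
    rewrite ler_int; apply: le_ceil; rewrite Hp Hq; exact: ler_wpM2l.
  have [k Hk] := proj2 (conv_minmax (fun k => (g k i)%:R) l0 l1).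
  exists (fun j => Num.ceil (r * (g k j)%:R)).
    by exists (g k); [exact: (proj1 (Hg k)) |].
  rewrite ler_int; apply: le_ceil; rewrite Hp Hq; exact: ler_wpM2l.
move=> f; split.
  apply: span_refine => a Ha.
  have [b [u [H1 H2]]] := @key _ _ _ I r Hup r0 a Ha.
  by exists b, u.
by apply: span_mono => a [].
Qed.
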